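(* For every finite alphabet $\Sigma$ and every family of boring extensions $\mathcal E$ over $\Sigma$, the quintuple $(\Sigma^{<\omega},\sqsubseteq,\Sigma,\mathcal S,\mathcal M_{\mathcal E})$ is an $(\mathcal S,\mathcal M)$-tree.
   Context: A tree is a partially ordered set $(T,\preceq)$ such that for every $a\in T$ the set $\{b\in T:b\prec a\}$ is finite and linearly ordered by $\preceq$. The level of $a$ is $\ell(a)=|\{b\in T:b\prec a\}|$; $T(n)=\{a\in T:\ell(a)=n\}$, and $T(\le n)$, $T(<n)$ are defined analogously. A node $b$ is an immediate successor of $a$ if $a\prec b$ and there is no $c$ with $a\prec c\prec b$. An $\mathcal S$-tree is a quadruple $(T,\preceq,\Sigma,\mathcal S)$ where $(T,\preceq)$ is a countable tree in which every node has finitely many immediate successors and $T(0)$ is finite, $\Sigma$ is a set, and $\mathcal S\colon T\times T^{<\omega}\times\Sigma\to T$ is a partial function such that: (S1) if $\mathcal S(a,\bar p,c)$ is defined then it is an immediate successor of $a$ and every entry of $\bar p$ has level at most $\ell(a)-1$; (S2) if $\mathcal S(a,\bar p,c)=\mathcal S(b,\bar q,d)$ then $a=b$, $\bar p=\bar q$ and $c=d$; (S3) for every $a\in T$ and every immediate successor $b$ of $a$ there are $\bar p\in T^{<\omega}$ and $c\in\Sigma$ with $b=\mathcal S(a,\bar p,c)$. For $S\subseteq T$, a map $f\colon S\to T$ is level-preserving if $\ell(a)=\ell(b)$ implies $\ell(f(a))=\ell(f(b))$; then $\tilde f(n)$ denotes $\ell(f(a))$ for any $a\in S$ with $\ell(a)=n$.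 An injection $F\colon T\to T$ is shape-preserving if (i) it is level-preserving; (ii) whenever $\mathcal S(a,\bar p,c)$ is defined, $\mathcal S(F(a),F(\bar p),c)$ is defined and $\mathcal S(F(a),F(\bar p),c)\preceq F(\mathcal S(a,\bar p,c))$, where $F(\bar p)$ is the tuple of images of the entries of $\bar p$; (iii) for every $a\in T(0)$ and $b\in T$ with $a\preceq b$ we have $a\preceq F(b)$. A shape-preserving $F$ skips level $m$ if $m\notin\tilde F[\omega]$, and skips only level $m$ if $\tilde F[\omega]=\omega\setminus\{m\}$. An $(\mathcal S,\mathcal M)$-tree is a quintuple $(T,\preceq,\Sigma,\mathcal S,\mathcal M)$ where $(T,\preceq,\Sigma,\mathcal S)$ is an $\mathcal S$-tree and $\mathcal M$ is a set of shape-preserving functions $T\to T$ such that: (M1) $\mathrm{Id}_T\in\mathcal M$, $\mathcal M$ is closed under composition, and whenever $(F_i)_{i\in\omega}$ is a sequence in $\mathcal M$ with $F_i\restriction T(\le i)=F_{i+1}\restriction T(\le i)$ for all $i$, there is $F_\infty\in\mathcal M$ with $F_\infty\restriction T(\le i)=F_i\restriction T(\le i)$ for all $i$; (M2) for every $n\in\omega$ and every $F\in\mathcal M$ with $\tilde F(n)>0$ which skips level $\tilde F(n)-1$, there are $F_1,F_2\in\mathcal M$ such that $F_2$ skips only level $\tilde F(n)-1$ and $(F_2\circ F_1)\restriction T(\le n)=F\restriction T(\le n)$; (M3) for all $n<m$ in $\omega$ there is $F^n_m\in\mathcal M$ skipping only level $m$ such that $F^n_m(b)=\mathcal S(b,\bar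 p,c)$ whenever $a\in T(n)$, $b\in T(m)$, $\bar p\in T^{<\omega}$, $c\in\Sigma$, $\mathcal S(a,\bar p,c)$ is defined and $\mathcal S(a,\bar p,c)\preceq b$. Words: $\Sigma^{<\omega}$ is the set of finite words over the finite alphabet $\Sigma$, ordered by $\sqsubseteq$ (initial segment); the level of a word is its length. For a word $w$ and $i<|w|$, $w_i$ is its letter at index $i$ (indices start at $0$), $w|_\ell$ is its initial segment of length $\ell\le|w|$, and $u^\frown v$ denotes concatenation. The successor operation $\mathcal S$ on $\Sigma^{<\omega}$ is defined only for empty parameter tuples, by $\mathcal S(a,(),c)=a^\frown c$. A family of boring extensions over $\Sigma$ is a sequence $\mathcal E=(\mathcal E_n)_{n\in\omega}$ with $\mathcal E_n$ a set of functions $\Sigma^n\to\Sigma$ such that: (B1) for all $m<n$, the function $e^n_m\colon\Sigma^n\to\Sigma$, $e^n_m(a)=a_m$, lies in $\mathcal E_n$; (B2) for all $m\le n$, $e_1\in\mathcal E_m$, $e_2\in\mathcal E_n$ there is $e_3\in\mathcal E_{n+1}$ with $e_3(a^\frown e_1(a)^\frown b)=e_2(a^\frown b)$ for all $a\in\Sigma^m$, $b\in\Sigma^{n-m}$. For $X\subseteq\Sigma^{<\omega}$, the set of interesting levels $I_{\mathcal E}(X)$ is the set of all $\ell\in\omega$ for which there is no $e\in\mathcal E_\ell$ such that $(a|_\ell)^\frown e(a|_\ell)\sqsubseteq a$ for every $a\in X$ with $|a|\ge\ell$. $\mathcal M_{\mathcal E}$ is the set of all shape-preserving $F\colon\Sigma^{<\omega}\to\Sigma^{<\omega}$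 with $I_{\mathcal E}(F[\Sigma^{<\omega}])=\tilde F[\omega]$. *)

(* Defs.v *)
From mathcomp Require Import all_boot.
From Stdlib Require List.
Set Implicit Arguments. Unset Strict Implicit. Unset Printing Implicit Defensive.

Section Trees.
Variables (T : Type) (le : T -> T -> Prop).

Definition tlt (a b : T) : Prop := le a b /\ a <> b.

Definition is_tree : Prop :=
  (forall a, le a a) /\
  (forall a b, le a b -> le b a -> a = b) /\
  (forall a b c, le a b -> le b c -> le a c) /\
  (forall a, exists l : list T, List.NoDup l /\ (forall b, tlt b a <-> List.In b l)) /\
  (forall a b c, tlt b a -> tlt c a -> le b c \/ le c b).

Definition has_level (a : T) (n : nat) : Prop :=
  exists l : list T, List.NoDup l /\ (forall b, tlt b a <-> List.In b l)
                     /\ List.length l = n.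

Definition imm_succ (a b : T) : Prop :=
  tlt a b /\ ~ (exists c, tlt a c /\ tlt c b).

Definition countable_type : Prop := exists f : T -> nat, injective f.

Variables (Sig : Type) (S : T -> seq T -> Sig -> option T).

Definition is_S_tree : Prop :=
  is_tree /\ countable_type /\
  (forall a, exists l : list T, forall b, imm_succ a b -> List.In b l) /\
  (exists l : list T, forall a, has_level a 0 -> List.In a l) /\
  (forall a p c b, S a p c = Some b ->
     imm_succ a b /\
     (forall q, List.In q p -> forall k la, has_level q k -> has_level a la ->
        k + 1 <= la)) /\
  (forall a b p q c d x, S a p c = Some x -> S b q d = Some x ->
     a = b /\ p = q /\ c = d) /\
  (forall a b, imm_succ a b -> exists p c, S a p c = Some b).

Definition level_preserving (F : T -> T) : Prop :=
  forall a b n k, has_level a n -> has_level b n ->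
    has_level (F a) k -> has_level (F b) k.

Definition tilde (F : T -> T) (n k : nat) : Prop :=
  exists a, has_level a n /\ has_level (F a) k.

Definition tilde_img (F : T -> T) (k : nat) : Prop :=
  exists n, tilde F n k.

Definition skips (F : T -> T) (m : nat) : Prop := ~ tilde_img F m.

Definition skips_only (F : T -> T) (m : nat) : Prop :=
  forall k, tilde_img F k <-> k <> m.

Definition shape_preserving (F : T -> T) : Prop :=
  injective F /\ level_preserving F /\
  (forall a p c b, S a p c = Some b ->
     exists b', S (F a) (map F p) c = Some b' /\ le b' (F b)) /\
  (forall a b, has_level a 0 -> le a b -> le a (F b)).

Definition agree_upto (i : nat) (F G : T -> T) : Prop :=
  forall a n, has_level a n -> n <= i -> F a = G a.

Definition is_SM_tree (M : (T -> T) -> Prop) : Prop :=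
  is_S_tree /\
  (forall F, M F -> shape_preserving F) /\
  (M id /\ (forall F G, M F -> M G -> M (F \o G)) /\
   (forall Fs : nat -> T -> T, (forall i, M (Fs i)) ->
      (forall i, agree_upto i (Fs i) (Fs i.+1)) ->
      exists Finf, M Finf /\ forall i, agree_upto i Finf (Fs i))) /\
  (forall n F k, M F -> tilde F n k -> 0 < k -> skips F (k - 1) ->
     exists F1 F2, M F1 /\ M F2 /\ skips_only F2 (k - 1) /\
       agree_upto n (F2 \o F1) F) /\
  (forall n m, n < m -> exists F, M F /\ skips_only F m /\
     forall a b p c x, has_level a n -> has_level b m -> S a p c = Some x ->
       le x b -> S b p c = Some (F b)).

End Trees.

Section Words.
Variable Sig : finType.

Definition word_le (u v : seq Sig) : Prop := prefix u v.

Definition word_S (a : seq Sig) (p : seq (seq Sig)) (c : Sig) : option (seq Sig) :=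
  if p is [::] then Some (rcons a c) else None.

Definition boring_ext (E : forall n, (n.-tuple Sig -> Sig) -> Prop) : Prop :=
  (forall m n (H : m < n), E n (fun a => tnth a (Ordinal H))) /\
  (forall m n (e1 : m.-tuple Sig -> Sig) (e2 : n.-tuple Sig -> Sig),
     m <= n -> E m e1 -> E n e2 ->
     exists e3 : n.+1.-tuple Sig -> Sig, E n.+1 e3 /\
       forall (a : m.-tuple Sig) (b : (n - m).-tuple Sig)
              (t : n.+1.-tuple Sig) (t' : n.-tuple Sig),
         val t = val a ++ e1 a :: val b -> val t' = val a ++ val b ->
         e3 t = e2 t').

Definition interesting (E : forall n, (n.-tuple Sig -> Sig) -> Prop)
    (X : seq Sig -> Prop) (l : nat) : Prop :=
  ~ exists e : l.-tuple Sig -> Sig, E l e /\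
      forall a, X a -> l <= size a ->
        forall t : l.-tuple Sig, val t = take l a ->
          prefix (rcons (val t) (e t)) a.

Definition M_E (E : forall n, (n.-tuple Sig -> Sig) -> Prop)
    (F : seq Sig -> seq Sig) : Prop :=
  shape_preserving word_le word_S F /\
  forall l, interesting E (fun w => exists v, w = F v) l <->
            tilde_img word_le F l.

End Words.

(* Main.v *)
Require Import Defs.
From mathcomp Require Import all_boot.
From mathcomp Require Import zify.
From Stdlib Require List Classical.
Set Implicit Arguments. Unset Strict Implicit. Unset Printing Implicit Defensive.

Lemma In_mem (T : eqType) (x : T) (s : seq T) : List.In x s <-> x \in s.
Proof.
elim: s => [|y s IH] //=; rewrite in_cons; split.
- by case=> [->|/IH ->]; rewrite ?eqxx ?orbT.
- by case/orP=> [/eqP ->|/IH]; [left|right].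
Qed.

Lemma uniq_NoDup (T : eqType) (s : seq T) : uniq s -> List.NoDup s.
Proof.
elim: s => [|y s IH] /=; first by constructor.
case/andP=> ys us; constructor; last exact: IH.
by move/In_mem; apply/negP.
Qed.

Lemma length_size (T : Type) (s : seq T) : length s = size s.
Proof. by elim: s => //= y s ->. Qed.

Section Words1.
Variable Sig : finType.
Variable x0 : Sig.
Notation word := (seq Sig).
Notation wle := (@word_le Sig).

Lemma word_antisym (a b : word) : prefix a b -> prefix b a -> a = b.
Proof.
move=> /prefixP [s ->] /size_prefix; rewrite size_cat.
case: s => [|y s] /=; first by rewrite cats0.
by rewrite addnS ltnNge leq_addr.
Qed.

Lemma tlt_take (a b : word) :
  tlt wle b a <-> exists2 i, i < size a & b = take i a.
Proof.
rewrite /tlt /word_le; split.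
- case=> pba nba; exists (size b); last by move: pba; rewrite prefixE => /eqP.
  rewrite ltn_neqAle size_prefix // andbT.
  apply/eqP=> e; apply: nba; move: pba; rewrite prefixE e take_size.
  by move/eqP.
- case=> i lti ->; split; first exact: prefix_take.
  move=> e; move: (f_equal size e); rewrite size_takel; last exact: ltnW.
  by move=> ei; rewrite ei ltnn in lti.
Qed.

Lemma tlt_size (a b : word) : tlt wle b a -> size b < size a.
Proof. by case/tlt_take=> i lti ->; rewrite size_takel //; apply: ltnW. Qed.

Definition preds (a : word) := [seq take i a | i <- iota 0 (size a)].

Lemma preds_spec (a : word) :
  List.NoDup (preds a) /\ (forall b, tlt wle b a <-> List.In b (preds a))
  /\ length (preds a) = size a.
Proof.
split; [|split].
- apply: uniq_NoDup; rewrite map_inj_in_uniq ?iota_uniq //.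
  move=> i j; rewrite !mem_iota /= !add0n => li lj e.
  by move: (f_equal size e); rewrite !size_takel //; apply: ltnW.
- move=> b; rewrite In_mem tlt_take; split.
  + by case=> i lti ->; apply/mapP; exists i; rewrite // mem_iota.
  + by case/mapP=> i; rewrite mem_iota add0n => /andP [_ lti] ->; exists i.
- by rewrite length_size size_map size_iota.
Qed.

Lemma has_level_size (a : word) n : has_level wle a n <-> size a = n.
Proof.
have [nd [sp ln]] := preds_spec a.
split.
- case=> l [ndl [spl <-]].
  rewrite -ln; apply/eqP; rewrite eqn_leq; apply/andP; split; apply/leP.
  + apply: List.NoDup_incl_length => // b /sp /spl.  done.
  + apply: List.NoDup_incl_length => // b /spl /sp. done.
- by move=> <-; exists (preds a).
Qed.

Lemma imm_succ_rcons (a b : word) :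
  imm_succ wle a b <-> exists c, b = rcons a c.
Proof.
split.
- case=> tab nmid; have sab := tlt_size tab.
  case: tab => pab _.
  have ea : take (size a) b = a by move: pab; rewrite /word_le prefixE => /eqP.
  exists (nth x0 b (size a)); rewrite -{1}ea -take_nth //.
  case: (eqVneq (take (size a).+1 b) b) => [//|ne]; exfalso; apply: nmid.
  exists (take (size a).+1 b); split; last by split; [exact: prefix_take|exact/eqP].
  split; first by rewrite /word_le prefixE take_takel // ea.
  move=> e; move: (f_equal size e); rewrite size_takel //.
  lia.
- case=> c ->; split.
  + split; first exact: prefix_rcons.
    by move=> e; move: (f_equal size e); rewrite size_rcons; lia.
  + case=> d [/tlt_size h1 /tlt_size]; rewrite size_rcons; lia.
Qed.


Lemma word_S_tree : is_S_tree wle (@word_S Sig).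
Proof.
split; [|split; [|split; [|split; [|split; [|split]]]]].
- split; [|split; [|split; [|split]]].
  + move=> a; exact: prefix_refl.
  + exact: word_antisym.
  + move=> a b c; exact: prefix_trans.
  + by move=> a; have [nd [sp _]] := preds_spec a; exists (preds a).
  + move=> a b c /tlt_take [i _ ->] /tlt_take [j _ ->].
    rewrite /word_le; case: (leqP i j) => h.
    * by left; rewrite -(take_takel a h); exact: prefix_take.
    * by right; rewrite -(take_takel a (ltnW h)); exact: prefix_take.
- by exists pickle; apply: (pcan_inj pickleK).
- move=> a; exists (map (rcons a) (enum Sig)) => b /imm_succ_rcons [c ->].
  by apply/In_mem; apply: map_f; rewrite mem_enum.
- exists [:: [::]] => a /has_level_size; case: a => // _; by left.
- move=> a [|q p] c b //= [<-]; split; first by apply/imm_succ_rcons; exists c.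
  by [].
- move=> a b [|? ?] [|? ?] c d x //= [<-] [] /esym /rcons_inj [-> ->]. done.
- move=> a b /imm_succ_rcons [c ->]; by exists [::], c.
Qed.

Definition SPw (F : word -> word) :=
  injective F /\ (forall a b, size a = size b -> size (F a) = size (F b)) /\
  (forall a c, prefix (rcons (F a) c) (F (rcons a c))).

Lemma SP_iff F : shape_preserving wle (@word_S Sig) F <-> SPw F.
Proof.
split.
- case=> inj [lp [ps _]]; split; [done|split].
  + move=> a b e; apply/esym/(has_level_size (F b)).
    apply: (lp a b (size a)); apply/has_level_size => //.
  + move=> a c; have [b' [[<-] h]] := ps a [::] c (rcons a c) erefl; exact: h.
- case=> inj [lp ps]; split; [done|split; [|split]].
  + move=> a b n k /has_level_size ha /has_level_size hb /has_level_size hk.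
    by apply/has_level_size; rewrite -hk; apply: lp; rewrite ha hb.
  + move=> a [|? ?] c b //= [<-]; exists (rcons (F a) c); split => //; exact: ps.
  + move=> a b /has_level_size; case: a => // _ _; exact: prefix0s.
Qed.


Lemma prefix_nth (u w : word) i : prefix u w -> i < size u -> nth x0 w i = nth x0 u i.
Proof. by case/prefixP=> s -> h; rewrite nth_cat h. Qed.

Lemma prefix_take_eq (u w : word) i : prefix u w -> i <= size u -> take i w = take i u.
Proof. by case/prefixP=> s -> h; rewrite takel_cat. Qed.

Lemma pref_rcons_nth (w : word) l x :
  l < size w -> prefix (rcons (take l w) x) w -> nth x0 w l = x.
Proof.
move=> lt p; have := prefix_nth p; rewrite size_rcons size_takel ?(ltnW lt) //.
by move=> /(_ l (ltnSn l)); rewrite nth_rcons size_takel ?(ltnW lt) // ltnn eqxx.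
Qed.

Lemma rcons_nth_pref (w : word) l :
  l < size w -> prefix (rcons (take l w) (nth x0 w l)) w.
Proof. by move=> lt; rewrite -take_nth //; exact: prefix_take. Qed.

Section SPlemmas.
Variable F : word -> word.
Hypothesis spF : SPw F.

Definition lev n := size (F (nseq n x0)).

Lemma size_lev a : size (F a) = lev (size a).
Proof. by apply: spF.2.1; rewrite size_nseq. Qed.

Lemma lev_S n : lev n < lev n.+1.
Proof.
have := size_prefix (spF.2.2 (nseq n x0) x0).
by rewrite size_rcons !size_lev size_rcons size_nseq.
Qed.

Lemma lev_mono m n : m < n -> lev m < lev n.
Proof.
elim: n => // n IH; rewrite ltnS leq_eqVlt => /orP [/eqP ->|/IH h].
  exact: lev_S.
exact: ltn_trans h (lev_S n).
Qed.

Lemma lev_ltn m n : (lev m < lev n) = (m < n).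
Proof.
case: (ltnP m n) => h; first exact: lev_mono h.
apply/negbTE; rewrite -leqNgt; move: h; rewrite leq_eqVlt => /orP [/eqP ->|/lev_mono /ltnW] //.
Qed.

Lemma lev_leq m n : (lev m <= lev n) = (m <= n).
Proof. by rewrite leqNgt lev_ltn -leqNgt. Qed.

Lemma lev_inj m n : lev m = lev n -> m = n.
Proof. by move=> e; apply/eqP; rewrite eqn_leq -(lev_leq m n) -(lev_leq n m) e leqnn. Qed.

Lemma lev_geq n : n <= lev n.
Proof. elim: n => // n IH; exact: leq_ltn_trans IH (lev_S n). Qed.

Lemma pref_mono a b : prefix a b -> prefix (F a) (F b).
Proof.
case/prefixP=> s ->; elim/last_ind: s => [|s c IH]; first by rewrite cats0 prefix_refl.
rewrite -rcons_cat; apply: prefix_trans IH _.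
apply: prefix_trans (spF.2.2 _ c); exact: prefix_rcons.
Qed.

Lemma take_F k a : k <= size a -> take (lev k) (F a) = F (take k a).
Proof.
move=> h; have := pref_mono (prefix_take a k); rewrite prefixE size_lev size_takel //.
by move/eqP.
Qed.

Lemma nth_F k a : k < size a -> nth x0 (F a) (lev k) = nth x0 a k.
Proof.
move=> h; have p1 := pref_mono (prefix_take a k.+1).
rewrite (take_nth x0 h) in p1.
have p2 := prefix_trans (spF.2.2 (take k a) (nth x0 a k)) p1.
rewrite (prefix_nth p2); last by rewrite size_rcons size_lev size_takel ?(ltnW h).
by rewrite nth_rcons size_lev size_takel ?(ltnW h) // ltnn eqxx.
Qed.

End SPlemmas.

Variable E : forall n, (n.-tuple Sig -> Sig) -> Prop.
Hypothesis hE : boring_ext E.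

Definition mk n (s : word) : n.-tuple Sig := insubd (nseq_tuple n x0) s.

Lemma mkK n s : size s = n -> val (mk n s) = s.
Proof. by move=> h; rewrite val_insubd /= h eqxx. Qed.

Definition Es n (g : word -> Sig) :=
  exists e : n.-tuple Sig -> Sig, E e /\ forall t, g (val t) = e t.

Lemma B1s m n : m < n -> Es n (fun s => nth x0 s m).
Proof.
move=> h; exists (fun a => tnth a (Ordinal h)); split; first exact: hE.1.
by move=> t; rewrite (tnth_nth x0).
Qed.

Lemma B2s m n g1 g2 : m <= n -> Es m g1 -> Es n g2 ->
  exists g3, Es n.+1 g3 /\ forall a b, size a = m -> size b = n - m ->
    g3 (a ++ g1 a :: b) = g2 (a ++ b).
Proof.
move=> mn [e1 [E1 h1]] [e2 [E2 h2]].
have [e3 [E3 h3]] := hE.2 m n e1 e2 mn E1 E2.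
exists (fun s => e3 (mk n.+1 s)); split.
  by exists e3; split => // t; rewrite /mk valKd.
move=> a b sa sb.
have ea : val (mk m a) = a := mkK sa.
have eb : val (mk (n - m) b) = b := mkK sb.
have et : val (mk n.+1 (a ++ g1 a :: b)) = a ++ g1 a :: b.
  by apply: mkK; rewrite size_cat /= sa sb; lia.
have et' : val (mk n (a ++ b)) = a ++ b by apply: mkK; rewrite size_cat sa sb; lia.
rewrite -et' h2; apply: (h3 (mk m a) (mk (n - m) b)); first by rewrite et ea eb -h1 ea.
by rewrite et' ea eb.
Qed.

Definition bor (F : word -> word) l := exists g, Es l g /\
  forall v, l < size (F v) -> nth x0 (F v) l = g (take l (F v)).

Lemma ME_char F : M_E E F <-> SPw F /\ forall l, (forall v, size (F v) <> l) -> bor F l.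
Proof.
rewrite /M_E SP_iff; split.
- case=> sp hi; split => // l nl.
  have ti : ~ tilde_img wle F l.
    by case=> n [a [_ /has_level_size]]; exact: nl.
  have : ~ interesting E (fun w => exists v, w = F v) l by move/(hi l).
  move/Classical_Prop.NNPP => [e [El he]].
  exists (fun s => e (mk l s)); split; first by exists e; split => // t; rewrite /mk valKd.
  move=> v lt.
  have := he (F v) (ex_intro _ v erefl) (ltnW lt) (mk l (take l (F v)))
              (mkK (size_takel (ltnW lt))).
  rewrite mkK ?size_takel ?(ltnW lt) //; exact: pref_rcons_nth.
- case=> sp hb; split => // l; split.
  + move=> hint; apply: Classical_Prop.NNPP => nt; apply: hint.
    have nl : forall v, size (F v) <> l.
      move=> v e; apply: nt; exists (size v), v; split; by apply/has_level_size.
    have [g [[e [El he]] hg]] := hb l nl; exists e; split => //.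
    move=> a [v ->] la t et.
    have lt : l < size (F v).
      rewrite ltn_neqAle la andbT; apply/eqP => h; exact: (nl v (esym h)).
    rewrite -he et -(hg v lt); exact: rcons_nth_pref.
  + case=> n [a [_ /has_level_size ha]] [e [El he]].
    have := he (F a) (ex_intro _ a erefl) (eq_leq (esym ha)) (mk l (F a)).
    rewrite mkK // take_oversize ?ha // => /(_ erefl) /size_prefix.
    by rewrite size_rcons ltnn.
Qed.


Lemma take_rcons_le n (s : word) x : n <= size s -> take n (rcons s x) = take n s.
Proof. by move=> h; rewrite -cats1 takel_cat. Qed.

Lemma tilde_img_size F k : tilde_img wle F k <-> exists v, size (F v) = k.
Proof.
split; first by case=> n [a [_ /has_level_size h]]; exists a.
by case=> v h; exists (size v), v; split; apply/has_level_size.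
Qed.

Lemma agree_size i F G : agree_upto wle i F G <-> forall a, size a <= i -> F a = G a.
Proof.
split; first by move=> h a; apply: h; apply/has_level_size.
by move=> h a n /has_level_size <-; apply: h.
Qed.

Lemma common_pref (p X Y : word) l : prefix p X -> prefix p Y -> l < size p ->
  nth x0 X l = nth x0 Y l /\ take l X = take l Y.
Proof.
move=> pX pY lt; rewrite (prefix_nth pX lt) (prefix_nth pY lt).
by rewrite (prefix_take_eq pX (ltnW lt)) (prefix_take_eq pY (ltnW lt)).
Qed.

Definition Ins m (g : word -> Sig) (w : word) :=
  if size w < m then w else take m w ++ g (take m w) :: drop m w.

Lemma size_Ins m g w : size (Ins m g w) = if size w < m then size w else (size w).+1.
Proof.
rewrite /Ins; case: ifP => h //; rewrite size_cat /= size_drop size_takel; first lia.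
by rewrite leqNgt h.
Qed.

Lemma Ins_SP m g : SPw (Ins m g).
Proof.
split; [|split].
- move=> u w e.
  have su : size u = size w.
    move: (f_equal size e); rewrite !size_Ins; case: ifP; case: ifP; lia.
  move: e; rewrite /Ins su; case: ifP => h // /eqP.
  rewrite eqseq_cat; last by rewrite !size_takel // leqNgt ?su h.
  case/andP=> /eqP e1 /eqP [_ e2].
  by rewrite -(cat_take_drop m u) -(cat_take_drop m w) e1 e2.
- by move=> a b e; rewrite !size_Ins e.
- move=> a c; rewrite /Ins size_rcons; case: (ltnP (size a) m) => h.
  + case: (ltnP (size a).+1 m) => h2; first exact: prefix_refl.
    rewrite take_oversize ?size_rcons //; exact: prefix_prefix.
  + have h2 : (size a).+1 < m = false by apply/negbTE; rewrite -leqNgt; lia.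
    rewrite h2 take_rcons_le // drop_rcons // rcons_cat /= .
    exact: prefix_refl.
Qed.

Lemma Ins_skip m g l : (forall v, size (Ins m g v) <> l) -> l = m.
Proof.
move=> h; case: (ltngtP l m) => // hl; exfalso.
- by apply: (h (nseq l x0)); rewrite size_Ins size_nseq hl.
- apply: (h (nseq l.-1 x0)); rewrite size_Ins size_nseq.
  have -> : l.-1 < m = false by apply/negbTE; rewrite -leqNgt; lia.
  lia.
Qed.

Lemma Ins_ME m g : Es m g -> M_E E (Ins m g) /\ skips_only wle (Ins m g) m.
Proof.
move=> Eg; split.
- apply/ME_char; split; first exact: Ins_SP.
  move=> l /Ins_skip ->; exists g; split => // v.
  rewrite size_Ins /Ins; case: ifP => h; first by move=> lt; rewrite ltnNge (ltnW lt) in h.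
  move=> _.
  have st : size (take m v) = m by rewrite size_takel // leqNgt h.
  by rewrite nth_cat st ltnn subnn /= take_size_cat.
- move=> k; rewrite tilde_img_size; split.
  + case=> v <-; rewrite size_Ins; case: ifP; lia.
  + move=> nk; case: (ltngtP k m) => hk //.
    * by exists (nseq k x0); rewrite size_Ins size_nseq hk.
    * exists (nseq k.-1 x0); rewrite size_Ins size_nseq.
      have -> : k.-1 < m = false by apply/negbTE; rewrite -leqNgt; lia.
      lia.
Qed.

Lemma id_ME : M_E E id.
Proof.
apply/ME_char; split.
- split; [by []|split; [by []|]] => a c; exact: prefix_refl.
- by move=> l /(_ (nseq l x0)); rewrite size_nseq.
Qed.

Lemma lift F k g' : SPw F -> (forall l, (forall v, size (F v) <> l) -> bor F l) ->
  Es k g' -> exists g, Es (lev F k) g /\ forall u, size u = k -> g (F u) = g' u.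
Proof.
move=> sp hb Eg'.
have P : forall j, j <= lev F k -> exists i, [/\ i <= k,
    (forall i', i' < i -> lev F i' < j), (forall i', i <= i' -> j <= lev F i') &
    exists g, Es (j + (k - i)) g /\
      forall u, size u = k -> g (take j (F u) ++ drop i u) = g' u].
  elim=> [_|j IH hj].
    exists 0; split => //; exists g'; rewrite add0n subn0; split => // u _.
    by rewrite take0 drop0.
  have [i [ik hlt hge [g [Eg hg]]]] := IH (ltnW hj).
  case: (boolP ((i < k) && (lev F i == j))) => [/andP [ik' /eqP ej]|nij].
  - exists i.+1; split => //.
    + move=> i'; rewrite ltnS => hi'; rewrite ltnS -ej lev_leq //.
    + move=> i' hi'; rewrite -ej lev_ltn //.
    + exists g; have -> : j.+1 + (k - i.+1) = j + (k - i) by lia.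
      split => // u su.
      have ju : j < size (F u) by rewrite (size_lev sp) su.
      rewrite (take_nth x0 ju) -{2}ej (nth_F sp) ?su //.
      by rewrite cat_rcons -drop_nth ?su // hg.
  - have nj : forall v, size (F v) <> j.
      move=> v; rewrite (size_lev sp) => e.
      case: (ltnP (size v) i) => h1; first by have := hlt _ h1; rewrite e ltnn.
      move: h1; rewrite leq_eqVlt => /orP [/eqP ei|h1].
      * move: e; rewrite -ei => e; move: nij; rewrite e eqxx andbT -leqNgt => h2.
        have ek : i = k by apply/eqP; rewrite eqn_leq ik h2.
        by move: hj; rewrite -e ek ltnn.
      * have := hge _ (leqnn i); have := lev_mono sp h1; rewrite e; lia.
    have [gj [Egj hgj]] := hb j nj.
    have [g3 [Eg3 hg3]] := B2s (leq_addr (k - i) j) Egj Eg.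
    exists i; split => //.
    + by move=> i' /hlt h; apply: ltnW.
    + move=> i' hi'; have := hge _ hi'; rewrite leq_eqVlt => /orP [/eqP e|//].
      by exfalso; apply: (nj (nseq i' x0)); rewrite (size_lev sp) size_nseq e.
    + exists g3; rewrite addSn; split => // u su.
      have ju : j < size (F u) by rewrite (size_lev sp) su.
      rewrite (take_nth x0 ju) cat_rcons (hgj u ju) hg3 ?hg //.
        by rewrite size_takel // ltnW.
      by rewrite size_drop su; lia.
have [i [ik _ hge [g [Eg hg]]]] := P _ (leqnn (lev F k)).
have ek : i = k.
  apply/eqP; rewrite eqn_leq ik /=; rewrite leqNgt; apply/negP => h.
  by have := hge _ (leqnn i); rewrite leqNgt lev_ltn // h.
subst i; rewrite subnn addn0 in Eg; exists g; split => // u su.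
rewrite -(hg u su) take_oversize ?drop_oversize ?su ?cats0 //.
by rewrite (size_lev sp) su.
Qed.

Lemma comp_ME F G : M_E E F -> M_E E G -> M_E E (F \o G).
Proof.
move=> /ME_char [spF bF] /ME_char [spG bG]; apply/ME_char; split.
- split; [exact: inj_comp spF.1 spG.1|split].
  + move=> a b e; apply: spF.2.1; exact: spG.2.1.
  + move=> a c /=; apply: prefix_trans (spF.2.2 (G a) c) _.
    apply: (pref_mono spF); exact: (spG.2.2 a c).
- move=> l nl; case: (Classical_Prop.classic (exists w, size (F w) = l)) => [[w hw]|nw].
  + have nG : forall v, size (G v) <> size w.
      by move=> v e; apply: (nl v); rewrite /= (size_lev spF) e -(size_lev spF).
    have [g' [Eg' hg']] := bG _ nG.
    have [g [Eg hg]] := lift spF bF Eg'.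
    rewrite (size_lev spF) in hw; subst l.
    exists g; split => // v /=; rewrite (size_lev spF) lev_ltn // => lt.
    rewrite (nth_F spF lt) (hg' v lt) -hg ?size_takel ?(ltnW lt) //.
    by rewrite (take_F spF (ltnW lt)).
  + have [g [Eg hg]] := bF l (fun w e => nw (ex_intro _ w e)).
    exists g; split => // v /=; exact: hg.
Qed.


Lemma lim_ME (Fs : nat -> word -> word) : (forall i, M_E E (Fs i)) ->
  (forall i, agree_upto wle i (Fs i) (Fs i.+1)) ->
  exists Finf, M_E E Finf /\ forall i, agree_upto wle i Finf (Fs i).
Proof.
move=> hs hag.
have sp i : SPw (Fs i) := ((ME_char (Fs i)).1 (hs i)).1.
have hb i := ((ME_char (Fs i)).1 (hs i)).2.
have ag i a : size a <= i -> Fs i a = Fs i.+1 a := (agree_size i _ _).1 (hag i) a.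
have chain : forall i j a, i <= j -> size a <= i -> Fs i a = Fs j a.
  move=> i j a ij sa; rewrite -(subnKC ij); elim: (j - i) => [|d IH]; first by rewrite addn0.
  rewrite IH addnS; apply: ag; exact: leq_trans sa (leq_addr _ _).
pose h n := lev (Fs n) n.
have levj : forall m j, m <= j -> lev (Fs j) m = h m.
  by move=> m j mj; rewrite /h /lev (chain m j) ?size_nseq.
have hmono : forall m n, m < n -> h m < h n.
  move=> m n mn; rewrite -(levj m n (ltnW mn)) /h; exact: (lev_mono (sp n) mn).
have hinj : forall m n, h m = h n -> m = n.
  move=> m n e; case: (ltngtP m n) => // /hmono; rewrite e ltnn //.
have hsz : forall a, size (Fs (size a) a) = h (size a) by move=> a; exact: size_lev (sp _) a.
exists (fun a => Fs (size a) a); split.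
- apply/ME_char; split.
  + split; [|split].
    * move=> a b /= e.
      have es : size a = size b by apply: hinj; rewrite -(hsz a) -(hsz b) e.
      by move: e; rewrite es; apply: (sp _).1.
    * by move=> a b e /=; rewrite !hsz e.
    * move=> a c /=; rewrite size_rcons (chain (size a) (size a).+1 a) //.
      exact: (sp _).2.2.
  + move=> l nl; pose m := l.+1.
    have nm : forall w, size (Fs m w) <> l.
      move=> w; case: (leqP (size w) m) => hw.
      * rewrite -(chain _ _ _ hw (leqnn _)); exact: nl.
      * rewrite (size_lev (sp m)); have := lev_mono (sp m) hw.
        have := lev_geq (sp m) m; rewrite /m; lia.
    have [g [Eg hg]] := hb m l nm.
    exists g; split => // v /= lt.
    case: (leqP (size v) m) => hv.
    * rewrite (chain _ _ _ hv (leqnn _)); apply: hg.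
      by rewrite -(chain _ _ _ hv (leqnn _)).
    * pose u := take m v.
      have su : size u = m by rewrite size_takel // ltnW.
      have pu : prefix (Fs m u) (Fs (size v) v).
        rewrite (chain m (size v) u) ?su ?(ltnW hv) //.
        apply: (pref_mono (sp _)); exact: prefix_take.
      have lu : l < size (Fs m u).
        rewrite (size_lev (sp m)) su; have := lev_geq (sp m) m; rewrite /m; lia.
      have [e1 e2] := common_pref (prefix_refl (Fs m u)) pu lu.
      rewrite -e1 -e2; exact: hg.
- move=> i; apply/agree_size => a sa /=; exact: chain _ _ _ sa (leqnn _).
Qed.

Lemma M3_ME n m : n < m -> exists F, M_E E F /\ skips_only wle F m /\
  forall a b p c x, has_level wle a n -> has_level wle b m ->
    word_S a p c = Some x -> wle x b -> word_S b p c = Some (F b).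
Proof.
move=> nm; have [hM hS] := Ins_ME (B1s nm).
exists (Ins m (fun s => nth x0 s n)); split => //; split => //.
move=> a b [|? ?] c x /has_level_size ha /has_level_size hb //= [<-] pb.
have e : nth x0 b n = c.
  by rewrite (prefix_nth pb) ?size_rcons ?ha // nth_rcons ha ltnn eqxx.
rewrite /Ins hb ltnn take_oversize ?hb // drop_oversize ?hb // cats1 e //.
Qed.


Lemma M2_ME n F k : M_E E F -> tilde wle F n k -> 0 < k -> skips wle F (k - 1) ->
  exists F1 F2, M_E E F1 /\ M_E E F2 /\ skips_only wle F2 (k - 1) /\
    agree_upto wle n (F2 \o F1) F.
Proof.
move=> hF [a [/has_level_size ha /has_level_size hk]] k0 sk.
have [sp hb] := (ME_char F).1 hF.
case: k k0 hk sk => // k' _ hk sk; rewrite subSS subn0 in sk *.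
have nk : forall v, size (F v) <> k'.
  by move=> v e; apply: sk; apply/tilde_img_size; exists v.
have levn : lev F n = k'.+1 by rewrite -ha -(size_lev sp) hk.
have nlev : forall p, lev F p <> k'.
  by move=> p e; apply: (nk (nseq p x0)); rewrite (size_lev sp) size_nseq.
have [g [Eg hg]] := hb k' nk.
pose del (w : word) := take k' w ++ drop k'.+1 w.
have delid : forall w, size w <= k' -> del w = w.
  move=> w hw; rewrite /del take_oversize // drop_oversize ?cats0 //; lia.
have sizedel : forall w, k' < size w -> size (del w) = (size w).-1.
  move=> w hw; rewrite /del size_cat size_drop size_takel; [lia|exact: ltnW].
have sizedel_le : forall w, size (del w) <= size w.
  move=> w; rewrite /del size_cat size_drop size_take; case: (ltnP k' (size w)) => h; lia.
have pref_del : forall u w, prefix u w -> size u <= k' -> prefix u (del w).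
  move=> u w pu su; rewrite /del; apply: prefix_catl.
  by move: pu; rewrite !prefixE take_takel.
have insdel : forall v, Ins k' g (del (F v)) = F v.
  move=> v; case: (ltngtP (size (F v)) k') => hs; last by exfalso; exact: nk v hs.
  - by rewrite delid ?(ltnW hs) // /Ins hs.
  - have st : size (take k' (F v)) = k' by rewrite size_takel // ltnW.
    rewrite /Ins /del size_cat st size_drop ltnNge leq_addr /=.
    rewrite take_size_cat // drop_size_cat // -(hg v hs) -(drop_nth x0 hs).
    exact: cat_take_drop.
pose F1 v := if size v <= n then del (F v) else del (F (take n v)) ++ drop n v.
have sF1a : forall v, size v < n -> size (F1 v) = lev F (size v) /\ lev F (size v) < k'.
  move=> v hv; have l1 := lev_mono sp hv; have l2 := nlev (size v).
  rewrite levn in l1; have l3 : lev F (size v) < k' by lia.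
  split => //; rewrite /F1 (ltnW hv) delid ?(size_lev sp) //; exact: ltnW.
have sF1b : forall v, n <= size v -> size (F1 v) = k' + (size v - n).
  move=> v hv; rewrite /F1; case: (leqP (size v) n) => hv2.
  - have e : size v = n by apply/eqP; rewrite eqn_leq hv hv2.
    by rewrite sizedel (size_lev sp) e levn ?subnn ?addn0.
  - have st : size (take n v) = n by rewrite size_takel // ltnW.
    have sF : k' < size (F (take n v)) by rewrite (size_lev sp) st levn.
    by rewrite size_cat (sizedel _ sF) (size_lev sp) st levn size_drop.
have sF1 : forall a b, size a = size b -> size (F1 a) = size (F1 b).
  move=> a' b' e; case: (ltnP (size a') n) => h1.
  - have h2 : size b' < n by rewrite -e.
    by rewrite (sF1a _ h1).1 (sF1a _ h2).1 e.
  - have h2 : n <= size b' by rewrite -e.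
    by rewrite (sF1b _ h1) (sF1b _ h2) e.
exists F1, (Ins k' g).
have [hM hS] := Ins_ME Eg.
split; last split => //; last split => //.
- apply/ME_char; split.
  + split; [|split] => //.
    * move=> a1 b1 e.
      have es : size a1 = size b1.
        have e' := f_equal size e.
        case: (ltnP (size a1) n) => h1; case: (ltnP (size b1) n) => h2.
        -- move: e'; rewrite (sF1a _ h1).1 (sF1a _ h2).1; exact: (lev_inj sp).
        -- move: e'; rewrite (sF1a _ h1).1 (sF1b _ h2); have := (sF1a _ h1).2; lia.
        -- move: e'; rewrite (sF1b _ h1) (sF1a _ h2).1; have := (sF1a _ h2).2; lia.
        -- move: e'; rewrite (sF1b _ h1) (sF1b _ h2); lia.
      move: e; rewrite /F1 -es; case: (leqP (size a1) n) => h1.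
      -- move=> /(f_equal (Ins k' g)); rewrite !insdel; exact: sp.1.
      -- have st : forall w : word, size w = size a1 ->
                     size (del (F (take n w))) = k'.
           move=> w sw; rewrite sizedel (size_lev sp) size_takel ?levn //; lia.
         move/eqP; rewrite eqseq_cat ?st // => /andP [/eqP e1 /eqP e2].
         have e3 : take n a1 = take n b1.
           by apply: sp.1; rewrite -(insdel (take n a1)) e1 insdel.
         by rewrite -(cat_take_drop n a1) -(cat_take_drop n b1) e3 e2.
    * move=> a1 c; rewrite /F1 size_rcons; case: (ltnP (size a1) n) => h1.
      -- rewrite (ltnW h1) delid; last by have := (sF1a _ h1).2; rewrite (size_lev sp); lia.
         apply: pref_del; first exact: sp.2.2.
         by rewrite size_rcons (size_lev sp); have := (sF1a _ h1).2; lia.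
      -- case: (leqP (size a1) n) => h2.
         ++ have e : size a1 = n by apply/eqP; rewrite eqn_leq h1 h2.
            rewrite -e take_rcons_le // take_size drop_rcons // drop_size /=.
            by rewrite cats1 prefix_refl.
         ++ rewrite take_rcons_le ?(ltnW h2) // drop_rcons ?(ltnW h2) // rcons_cat.
            exact: prefix_refl.
  + move=> l nl.
    have lk : l < k'.
      rewrite ltnNge; apply/negP => h; apply: (nl (nseq (n + (l - k')) x0)).
      rewrite sF1b size_nseq; lia.
    have nF : forall v, size (F v) <> l.
      move=> v e; case: (ltnP (size v) n) => hv.
      * by apply: (nl v); rewrite (sF1a _ hv).1 -(size_lev sp) e.
      * move: hv; rewrite -(lev_leq sp) levn -(size_lev sp) e; lia.
    have [gl [Egl hgl]] := hb l nF; exists gl; split => // v lt.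
    have key : forall w, prefix (take l.+1 (F w)) (F1 v) -> l < size (F w) ->
                 nth x0 (F1 v) l = gl (take l (F1 v)).
      move=> w pw lw.
      have sp1 : l < size (take l.+1 (F w)) by rewrite size_takel.
      have [e1 e2] := common_pref (prefix_take (F w) l.+1) pw sp1.
      by rewrite -e1 -e2; exact: hgl.
    case: (leqP (size v) n) => hv.
    * have hFv : F1 v = del (F v) by rewrite /F1 hv.
      have ls : l < size (F v) by have := sizedel_le (F v); rewrite -hFv; lia.
      apply: (key v) => //; rewrite hFv; apply: pref_del; first exact: prefix_take.
      by rewrite size_takel.
    * have hFv : F1 v = del (F (take n v)) ++ drop n v.
        by rewrite /F1 leqNgt hv.
      have ls : l < size (F (take n v)).
        by rewrite (size_lev sp) size_takel ?levn ?(ltnW hv) //; lia.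
      apply: (key (take n v)) => //; rewrite hFv; apply: prefix_catl.
      apply: pref_del; first exact: prefix_take.
      by rewrite size_takel.
- by apply/agree_size => v hv /=; rewrite /F1 hv insdel.
Qed.

End Words1.

Theorem mainTheorem12 (Sig : finType) (hne : 0 < #|Sig|)
    (E : forall n, (n.-tuple Sig -> Sig) -> Prop) (hE : boring_ext E) :
  is_SM_tree (@word_le Sig) (@word_S Sig) (M_E E).
Proof.
case/card_gt0P: hne => x0 _.
split; first exact: (word_S_tree x0).
split; first by move=> F [].
split; [split; [exact: (id_ME x0 E)|split]|split].
- move=> F G; exact: (comp_ME x0 hE).
- move=> Fs; exact: (lim_ME x0).
- move=> n F k; exact: (M2_ME x0).
- move=> n m; exact: (M3_ME x0 hE).
Qed.
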